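(* Let $A$ be a synaptic algebra, $p,q\in P$, $c:=(pqp+p^{\perp}q^{\perp}p^{\perp})^{1/2}$ and $s:=(pq^{\perp}p+p^{\perp}qp^{\perp})^{1/2}$. Then: (i) $c^2s^2=pqp+qpq-pqpq-qpqp=p(qp^{\perp}q)p+p^{\perp}(qpq)p^{\perp}=(pqp^{\perp}+p^{\perp}qp)^2$; (ii) $cs=|pqp^{\perp}+p^{\perp}qp|$.
   Context: Synaptic algebra (Foulis): $R$ is a real linear associative algebra with unit $1$, and $A\subseteq R$ is a real linear subspace with $1\in A$. For $a,b\in A$ write $aCb$ iff $ab=ba$; $C(a):=\{b\in A: aCb\}$; $CC(a):=\{b\in A: bCd \text{ for all } d\in C(a)\}$. $A$ is a synaptic algebra with enveloping algebra $R$ iff: (SA1) $A$ is a partially ordered archimedean real linear space with positive cone $A^+$, $1$ is an order unit, $\|\cdot\|$ the order-unit norm; (SA2) $a\in A\Rightarrow a^2\in A^+$; (SA3) $a,b\in A^+\Rightarrow aba\in A^+$; (SA4) if $a\in A$, $b\in A^+$, $aba=0$ then $ab=ba=0$; (SA5) if $a\in A^+$ there is $b\in A^+\cap CC(a)$ with $b^2=a$; (SA6) for $a\in A$ there is $p=p^2\in A$ with $ab=0\Leftrightarrow pb=0$ for all $b\in A$; (SA7) if $1\le a$ there is $b\in A$ with $ab=ba=1$; (SA8) if $a,b\in A$, $a_1\le a_2\le\cdots$ are pairwise commuting elements of $C(b)$ with $\|a-a_n\|\to0$, then $a\in C(b)$. $A$ is nondegenerate. Products are computed in $R$. $P:=\{p\in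 A:p=p^2\}$, $p^{\perp}:=1-p$. For $0\le a$, $a^{1/2}$ is its unique positive square root in $A$; $|a|:=(a^2)^{1/2}$. ($c$ and $s$ commute, so $cs\in A$.) *)

(* Defs.v *)
From HB Require Import structures.
From mathcomp Require Import all_boot all_order all_algebra.
From mathcomp Require Import boolp classical_sets reals.
Set Implicit Arguments. Unset Strict Implicit. Unset Printing Implicit Defensive.
Import Order.TTheory GRing.Theory Num.Theory.
Local Open Scope classical_set_scope.
Local Open Scope ring_scope.

Section Synaptic.
Variables (K : realType) (R : algType K).
(* A : the subspace of R, Apos : the positive cone A^+ *)
Variables (A Apos : set R).

Definition sa_le (a b : R) : Prop := Apos (b - a).

Definition sa_C (a : R) : set R := [set b | A b /\ a * b = b * a].
Definition sa_CC (a : R) : set R :=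
  [set b | A b /\ forall d, sa_C a d -> b * d = d * b].

Definition ou_norm (a : R) : K :=
  inf [set l : K | 0 <= l /\ sa_le (- (l *: 1)) a /\ sa_le a (l *: 1)].

Record synaptic_algebra : Prop := {
  sa_sub0 : A 0;
  sa_subD : forall a b, A a -> A b -> A (a + b);
  sa_subZ : forall (k : K) a, A a -> A (k *: a);
  sa_one : A 1;
  sa_pos_sub : forall a, Apos a -> A a;
  sa_pos0 : Apos 0;
  sa_posD : forall a b, Apos a -> Apos b -> Apos (a + b);
  sa_posZ : forall (k : K) a, 0 <= k -> Apos a -> Apos (k *: a);
  sa_pos_anti : forall a, Apos a -> Apos (- a) -> a = 0;
  sa_archimedean : forall a b, A a -> A b ->
      (forall n : nat, sa_le (n%:R *: a) b) -> sa_le a 0;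
  sa_order_unit : forall a, A a -> exists n : nat, sa_le a (n%:R *: 1);
  sa_SA2 : forall a, A a -> Apos (a * a);
  sa_SA3 : forall a b, Apos a -> Apos b -> Apos (a * b * a);
  sa_SA4 : forall a b, A a -> Apos b -> a * b * a = 0 -> a * b = 0 /\ b * a = 0;
  sa_SA5 : forall a, Apos a -> exists b, [/\ Apos b, sa_CC a b & b * b = a];
  sa_SA6 : forall a, A a -> exists p, [/\ A p, p * p = p &
      forall b, A b -> (a * b = 0 <-> p * b = 0)];
  sa_SA7 : forall a, A a -> sa_le 1 a -> exists b, [/\ A b, a * b = 1 & b * a = 1];
  sa_SA8 : forall a b (an : nat -> R), A a -> A b ->
      (forall n, sa_C b (an n)) ->
      (forall n, sa_le (an n) (an n.+1)) ->
      (forall m n, an m * an n = an n * an m) ->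
      (forall e : K, 0 < e -> exists N : nat, forall n, (N <= n)%N ->
          ou_norm (a - an n) < e) ->
      sa_C b a;
  sa_nondeg : (1 : R) != 0
}.

Definition sa_proj : set R := [set p | A p /\ p * p = p].

(* the (unique, by a theorem of Foulis) positive square root a^{1/2} *)
Definition sa_sqrt (a : R) : R := xget 0 [set b | Apos b /\ b * b = a].

Definition sa_abs (a : R) : R := sa_sqrt (a * a).

End Synaptic.

(* Main.v *)
Require Import Defs.
From HB Require Import structures.
From mathcomp Require Import all_boot all_order all_algebra.
From mathcomp Require Import boolp classical_sets reals.
Import GRing.Theory Num.Theory.
Local Open Scope ring_scope.

Lemma sa_Asub {K : realType} {R : algType K} {A Apos : set R}
  (SA : synaptic_algebra A Apos) {a b} : A a -> A b -> A (a - b).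
Proof.
move=> Aa Ab; rewrite -scaleN1r; apply: (sa_subD SA) => //; exact: (sa_subZ SA).
Qed.

Lemma sa_commA {K : realType} {R : algType K} {A Apos : set R}
  (SA : synaptic_algebra A Apos) {a b} : A a -> A b -> a * b = b * a -> A (a * b).
Proof.
move=> Aa Ab ab.
have Aab : A (a + b) by exact: (sa_subD SA).
have h : (a + b) * (a + b) - a * a - b * b = (2%:R : K) *: (a * b).
  rewrite scaler_nat mulrDl !mulrDr -ab mulr2n.
  by rewrite addrA [LHS]addrAC addrK [LHS]addrAC (addrC (a*a)) addrK.
have : A ((2%:R : K) *: (a * b)).
  rewrite -h; apply: (sa_Asub SA); [apply: (sa_Asub SA)|]; apply: (sa_pos_sub SA); exact: (sa_SA2 SA).
move/(sa_subZ SA (2%:R^-1)); rewrite scalerA mulVf ?scale1r //.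
by rewrite pnatr_eq0.
Qed.

Lemma sa_Apos1 {K : realType} {R : algType K} {A Apos : set R}
  (SA : synaptic_algebra A Apos) : Apos 1.
Proof. by rewrite -(mulr1 1); apply: (sa_SA2 SA); exact: (sa_one SA). Qed.

Lemma sa_zero_sq {K : realType} {R : algType K} {A Apos : set R}
  (SA : synaptic_algebra A Apos) {d} : A d -> d * d = 0 -> d = 0.
Proof.
move=> Ad dd; have h : d * 1 * d = 0 by rewrite mulr1.
have [] := sa_SA4 SA Ad (sa_Apos1 SA) h.
by rewrite mulr1.
Qed.

Lemma sa_sq_uniq {K : realType} {R : algType K} {A Apos : set R}
  (SA : synaptic_algebra A Apos) b r :
  Apos b -> Apos r -> b * r = r * b -> b * b = r * r -> b = r.
Proof.
move=> Pb Pr br bbrr.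
have Ab := sa_pos_sub SA Pb; have Ar := sa_pos_sub SA Pr.
have [u [Pu [Au CCu] uu]] := sa_SA5 SA Pb.
have [v [Pv [Av CCv] vv]] := sa_SA5 SA Pr.
have ur : u * r = r * u := CCu r (conj Ar br).
have vb : v * b = b * v := CCv b (conj Ab (esym br)).
have uv : u * v = v * u := CCu v (conj Av (esym vb)).
have ub : u * b = b * u by rewrite -uu mulrA.
have vr : v * r = r * v by rewrite -vv mulrA.
set d := b - r.
have Ad : A d := sa_Asub SA Ab Ar.
have ud : u * d = d * u by rewrite /d mulrBr mulrBl ub ur.
have vd : v * d = d * v by rewrite /d mulrBr mulrBl vb vr.
have sq x : x * d = d * x -> (x * d) * (x * d) = (x * x) * (d * d).
  by move=> xd; rewrite -mulrA (mulrA d x d) -xd -!mulrA.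
have ed : (b + r) * d = 0 by rewrite /d mulrDl !mulrBr bbrr br addrA subrK subrr.
have key : (u * d) * (u * d) + (v * d) * (v * d) = 0.
  by rewrite (sq u ud) (sq v vd) uu vv -mulrDl mulrA ed mul0r.
have P1 : Apos ((u * d) * (u * d)) := sa_SA2 SA (sa_commA SA Au Ad ud).
have P2 : Apos ((v * d) * (v * d)) := sa_SA2 SA (sa_commA SA Av Ad vd).
move: key; move/eqP; rewrite addr_eq0; move/eqP => e1.
have z2 : (v * d) * (v * d) = 0 by apply: (sa_pos_anti SA) => //; rewrite -e1.
have z1 : (u * d) * (u * d) = 0 by rewrite e1 z2 oppr0.
have ud0 : u * d = 0 := sa_zero_sq SA (sa_commA SA Au Ad ud) z1.
have vd0 : v * d = 0 := sa_zero_sq SA (sa_commA SA Av Ad vd) z2.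
have dd : d * d = 0.
  by rewrite {1}/d mulrBl -uu -vv -!mulrA ud0 vd0 !mulr0 subr0.
have := sa_zero_sq SA Ad dd.
by rewrite /d => /eqP; rewrite subr_eq0 => /eqP.
Qed.

Lemma sa_sqrt_spec {K : realType} {R : algType K} {A Apos : set R}
  (SA : synaptic_algebra A Apos) {a} : Apos a ->
  Apos (sa_sqrt Apos a) /\ sa_sqrt Apos a * sa_sqrt Apos a = a.
Proof.
move=> Pa; have [b [Pb _ bb]] := sa_SA5 SA Pa.
rewrite /sa_sqrt; apply: (@xgetPex _ 0 [set b | Apos b /\ b * b = a]).
by exists b.
Qed.

Lemma sa_sqrt_SA5 {K : realType} {R : algType K} {A Apos : set R}
  (SA : synaptic_algebra A Apos) {a b} : Apos b -> b * b = a ->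
  forall r, Apos r -> sa_CC A a r -> r * r = a -> b = r.
Proof.
move=> Pb bba r Pr [Ar CCr] rr.
have Ab := sa_pos_sub SA Pb.
have br : b * r = r * b.
  apply: esym; apply: CCr; split=> //; by rewrite -bba mulrA.
by apply: (sa_sq_uniq SA) => //; rewrite bba rr.
Qed.

Lemma sa_sqrt_eq {K : realType} {R : algType K} {A Apos : set R}
  (SA : synaptic_algebra A Apos) {a b} : Apos b -> b * b = a -> sa_sqrt Apos a = b.
Proof.
move=> Pb bba.
have Pa : Apos a by rewrite -bba; apply: (sa_SA2 SA); exact: (sa_pos_sub SA).
have [r [Pr CCr rr]] := sa_SA5 SA Pa.
have [Ps ss] := sa_sqrt_spec SA Pa.
by rewrite (sa_sqrt_SA5 SA Ps ss r Pr CCr rr) (sa_sqrt_SA5 SA Pb bba r Pr CCr rr).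
Qed.

Lemma sa_sqrt_CC {K : realType} {R : algType K} {A Apos : set R}
  (SA : synaptic_algebra A Apos) {a} : Apos a -> sa_CC A a (sa_sqrt Apos a).
Proof.
move=> Pa; have [r [Pr CCr rr]] := sa_SA5 SA Pa.
by rewrite (sa_sqrt_eq SA Pr rr).
Qed.

Section Idem.
Lemma idC {R : pzRingType} {p : R} : p * p = p -> (1 - p) * (1 - p) = 1 - p.
Proof. by move=> pp; rewrite mulrBr mulr1 mulrBl mul1r pp subrr subr0. Qed.
Lemma id0 {R : pzRingType} (p : R) : p * p = p -> p * (1 - p) = 0.
Proof. by move=> pp; rewrite mulrBr mulr1 pp subrr. Qed.
Lemma id0' {R : pzRingType} (p : R) : p * p = p -> (1 - p) * p = 0.
Proof. by move=> pp; rewrite mulrBl mul1r pp subrr. Qed.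
Lemma idL {R : pzRingType} (p x : R) : p * p = p -> x * p * p = x * p.
Proof. by move=> pp; rewrite -mulrA pp. Qed.
Lemma id0L {R : pzRingType} (p x : R) : p * p = p -> x * p * (1 - p) = 0.
Proof. by move=> pp; rewrite -mulrA id0 ?mulr0. Qed.
Lemma id0L' {R : pzRingType} (p x : R) : p * p = p -> x * (1 - p) * p = 0.
Proof. by move=> pp; rewrite -mulrA id0' ?mulr0. Qed.

Lemma G4 {R : pzRingType} (p q : R) : p * p = p -> q * q = q ->
  p * q * (1 - p) * q * p = p * q * p - p * q * p * q * p.
Proof. by move=> pp qq; rewrite !(mulrBr, mulrBl, mulr1, mul1r) (idL _ _ qq). Qed.

Lemma G1 {R : pzRingType} (p q : R) : p * p = p -> q * q = q ->
  p * q * p * (1 - q) * p = p * q * (1 - p) * q * p.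
Proof.
move=> pp qq; rewrite G4 //.
by rewrite mulrBr mulr1 mulrBl (idL _ _ pp).
Qed.

Lemma N1 {R : pzRingType} (p q : R) : p * p = p ->
  p * (1 - q) * (1 - p) = - (p * q * (1 - p)).
Proof. by move=> pp; rewrite (mulrBr p) mulr1 mulrBl id0 // sub0r. Qed.
Lemma N2 {R : pzRingType} (p q : R) : p * p = p ->
  (1 - p) * (1 - q) * p = - ((1 - p) * q * p).
Proof. by move=> pp; rewrite (mulrBr (1 - p)) mulr1 mulrBl id0' // sub0r. Qed.

Lemma G2 {R : pzRingType} (p q : R) : p * p = p ->
  p * (1 - q) * (1 - p) * (1 - q) * p = p * q * (1 - p) * q * p.
Proof.
move=> pp.
have pp' := idC pp.
have -> : p * (1 - q) * (1 - p) * (1 - q) * p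
   = (p * (1 - q) * (1 - p)) * ((1 - p) * (1 - q) * p) by rewrite !mulrA idL.
by rewrite N1 // N2 // mulrNN !mulrA idL.
Qed.

Lemma G5 {R : pzRingType} (p q : R) : p * p = p -> q * q = q ->
  (1 - p) * (1 - q) * (1 - p) * q * (1 - p) = (1 - p) * q * p * q * (1 - p).
Proof.
move=> pp qq.
have pp' := idC pp; have qq' := idC qq.
have h1 := G1 _ _ pp' qq'. rewrite !subKr in h1.
have h2 := G2 _ q pp'. rewrite !subKr in h2.
by rewrite h1 h2.
Qed.
End Idem.

Lemma zm {V : zmodType} (a b c d e : V) :
  a + b - c - d = (a - e) + ((b - c) - (d - e)).
Proof.
by rewrite opprB !addrA (addrAC a (- e) b) (addrAC (a + b) (- e) (- c)) subrK.
Qed.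

Theorem theorem5p2 (K : realType) (R : algType K) (A Apos : set R)
    (SA : synaptic_algebra A Apos) (p q : R) :
  sa_proj A p -> sa_proj A q ->
  let c := sa_sqrt Apos (p * q * p + (1 - p) * (1 - q) * (1 - p)) in
  let s := sa_sqrt Apos (p * (1 - q) * p + (1 - p) * q * (1 - p)) in
  [/\ c * c * (s * s) = p * q * p + q * p * q - p * q * p * q - q * p * q * p,
      p * q * p + q * p * q - p * q * p * q - q * p * q * p
        = p * (q * (1 - p) * q) * p + (1 - p) * (q * p * q) * (1 - p),
      p * (q * (1 - p) * q) * p + (1 - p) * (q * p * q) * (1 - p)
        = (p * q * (1 - p) + (1 - p) * q * p) ^+ 2
    & c * s = sa_abs Apos (p * q * (1 - p) + (1 - p) * q * p)].
Proof.
move=> [Ap pp] [Aq qq] c s.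
have pp' := idC pp; have qq' := idC qq.
have Ap' : A (1 - p) := sa_Asub SA (sa_one SA) Ap.
have Aq' : A (1 - q) := sa_Asub SA (sa_one SA) Aq.
have Pp : Apos p by rewrite -pp; exact: (sa_SA2 SA).
have Pq : Apos q by rewrite -qq; exact: (sa_SA2 SA).
have Pp' : Apos (1 - p) by rewrite -pp'; exact: (sa_SA2 SA).
have Pq' : Apos (1 - q) by rewrite -qq'; exact: (sa_SA2 SA).
set C := p * q * p + (1 - p) * (1 - q) * (1 - p).
set S := p * (1 - q) * p + (1 - p) * q * (1 - p).
set M := p * (q * (1 - p) * q) * p + (1 - p) * (q * p * q) * (1 - p).
set X := p * q * (1 - p) + (1 - p) * q * p.
set E := p * q * p + q * p * q - p * q * p * q - q * p * q * p.
have PC : Apos C := sa_posD SA (sa_SA3 SA Pp Pq) (sa_SA3 SA Pp' Pq').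
have PS : Apos S := sa_posD SA (sa_SA3 SA Pp Pq') (sa_SA3 SA Pp' Pq).
have [Pc cc] : Apos c /\ c * c = C := sa_sqrt_spec SA PC.
have [Ps ss] : Apos s /\ s * s = S := sa_sqrt_spec SA PS.
have CS : C * S = M.
  rewrite /C /S /M mulrDl (mulrDr (p * q * p)) (mulrDr ((1 - p) * (1 - q) * (1 - p))) !mulrA.
  rewrite ?(idL _ _ pp) ?(idL _ _ pp') ?(id0L _ _ pp) ?(id0L' _ _ pp) ?mul0r ?add0r ?addr0.
  by rewrite G1 // G5.
have X2 : X ^+ 2 = M.
  rewrite /X /M expr2 mulrDl (mulrDr (p * q * (1 - p))) (mulrDr ((1 - p) * q * p)) !mulrA.
  by rewrite ?(idL _ _ pp) ?(idL _ _ pp') ?(id0L _ _ pp) ?(id0L' _ _ pp) ?mul0r ?add0r ?addr0.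
have EM : E = M.
  rewrite /E /M !mulrA G4 //.
  have -> : (1 - p) * q * p * q * (1 - p) = (q * p * q - p * q * p * q) - (q * p * q * p - p * q * p * q * p).
    by rewrite mulrBr mulr1 !mulrBl !mul1r.
  exact: zm.
have CpS : C + S = 1.
  rewrite /C /S addrACA -(mulrDl (p * q) (p * (1 - q)) p) -(mulrDr p q (1 - q)).
  rewrite -(mulrDl ((1 - p) * (1 - q)) ((1 - p) * q) (1 - p)) -(mulrDr (1 - p) (1 - q) q).
  by rewrite (addrC q (1 - q)) !subrK !mulr1 pp pp' (addrC p (1 - p)) subrK.
have cs : c * s = s * c.
  have [As CCs] : sa_CC A S s := sa_sqrt_CC SA PS.
  apply: esym; apply: CCs; split; first exact: (sa_pos_sub SA).
  have -> : S = 1 - c * c by rewrite cc -CpS addrC addKr.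
  by rewrite mulrBl mulrBr mul1r mulr1 mulrA.
split.
- by rewrite cc ss CS EM.
- exact: EM.
- by rewrite X2.
rewrite /sa_abs; apply: esym; apply: (sa_sqrt_eq SA).
  have [w [Pw [Aw CCw] ww]] := sa_SA5 SA Pc.
  have ws : w * s = s * w by apply: CCw; split; [exact: (sa_pos_sub SA)|].
  by rewrite -ww -mulrA ws mulrA; exact: (sa_SA3 SA).
rewrite -mulrA (mulrA s c s) -cs !mulrA -mulrA cc ss CS -X2 expr2 //.
Qed.
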